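(* Let $(M,d)$ be a metric space, $Q\ge2$ an integer, and let $\mathbf P\in\mathcal A_Q(M)$ not be of the form $Q[\![P]\!]$ for any $P\in M$. Then there exist an integer $1\le R<Q$, an open neighborhood $U$ of $\mathbf P$ in $\mathcal A_Q(M)$ and continuous maps $\pi_1\colon U\to\mathcal A_R(M)$, $\pi_2\colon U\to\mathcal A_{Q-R}(M)$ such that $\mathbf S=\pi_1(\mathbf S)+\pi_2(\mathbf S)$ for every $\mathbf S\in U$, and $$\mathcal G(\mathbf S,\mathbf T)^2=\mathcal G\big(\pi_1(\mathbf S),\pi_1(\mathbf T)\big)^2+\mathcal G\big(\pi_2(\mathbf S),\pi_2(\mathbf T)\big)^2\quad\text{for all }\mathbf S,\mathbf T\in U.$$
   Context: For a metric space $(M,d)$ and a positive integer $Q$, $\mathcal A_Q(M)$ is the set of measures on $M$ of the form $\sum_{i=1}^Q[\![P_i]\!]$ with $P_i\in M$ not necessarily distinct ($[\![P]\!]$ the Dirac mass at $P$), with the metric $\mathcal G\big(\sum_i[\![A_i]\!],\sum_i[\![B_i]\!]\big)=\min_\sigma\sqrt{\sum_{i=1}^Q d(A_i,B_{\sigma(i)})^2}$, minimum over all permutations $\sigma$ of $\{1,\dots,Q\}$; the same definition is used for $\mathcal A_R(M)$, $\mathcal A_{Q-R}(M)$, and sums are sums of measures. *)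

(* Defs.v *)
From mathcomp Require Import all_boot all_order all_algebra all_fingroup.
From mathcomp Require Import reals.
Set Implicit Arguments. Unset Strict Implicit. Unset Printing Implicit Defensive.
Import Order.TTheory GRing.Theory Num.Theory.
Local Open Scope ring_scope.

Definition is_metric (R : realType) (M : Type) (d : M -> M -> R) : Prop :=
  [/\ (forall x y, 0 <= d x y),
      (forall x y, d x y = 0 <-> x = y),
      (forall x y, d x y = d y x) &
      (forall x y z, d x z <= d x y + d y z)].

(* A point sum_{i<n} [[x i]] of A_n(M) is represented by x : 'I_n -> M.
   Two representatives (possibly with different index types) denote the
   same measure iff they agree up to a bijection of indices. *)
Definition eqA (M : Type) (n m : nat) (x : 'I_n -> M) (y : 'I_m -> M) : Prop :=
  exists f : 'I_n -> 'I_m, bijective f /\ forall i, y (f i) = x i.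

(* Sum of measures: concatenation of representatives. *)
Definition sumA (M : Type) (a b : nat) (x : 'I_a -> M) (y : 'I_b -> M)
  : 'I_(a + b) -> M :=
  fun i => match split i with inl j => x j | inr k => y k end.

Definition Gcost (R : realType) (M : Type) (d : M -> M -> R) (n : nat)
  (x y : 'I_n -> M) (s : 'S_n) : R :=
  Num.sqrt (\sum_(i < n) d (x i) (y (s i)) ^+ 2).

Definition G (R : realType) (M : Type) (d : M -> M -> R) (n : nat)
  (x y : 'I_n -> M) : R :=
  \big[Num.min/Gcost d x y 1%g]_(s : 'S_n) Gcost d x y s.

(* U is a set of points of A_n(M): saturated for eqA. *)
Definition saturated (M : Type) (n : nat) (U : ('I_n -> M) -> Prop) : Prop :=
  forall x y, eqA x y -> U x -> U y.

Definition openA (R : realType) (M : Type) (d : M -> M -> R) (n : nat)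
  (U : ('I_n -> M) -> Prop) : Prop :=
  forall x, U x -> exists2 e : R, 0 < e & forall y, G d x y < e -> U y.

Definition wellDefinedOn (M : Type) (n m : nat) (U : ('I_n -> M) -> Prop)
  (f : ('I_n -> M) -> ('I_m -> M)) : Prop :=
  forall x y, U x -> U y -> eqA x y -> eqA (f x) (f y).

Definition continuousOn (R : realType) (M : Type) (d : M -> M -> R) (n m : nat)
  (U : ('I_n -> M) -> Prop) (f : ('I_n -> M) -> ('I_m -> M)) : Prop :=
  forall x, U x -> forall e : R, 0 < e ->
    exists2 del : R, 0 < del &
      forall y, U y -> G d x y < del -> G d (f x) (f y) < e.

(* Main.v *)
Require Import Defs.
From mathcomp Require Import all_boot all_order all_algebra all_fingroup.
From mathcomp Require Import reals ring lra zify.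
Import Order.TTheory GRing.Theory Num.Theory.
Local Open Scope ring_scope.
Set Implicit Arguments. Unset Strict Implicit. Unset Printing Implicit Defensive.

Lemma split_l m n (i : 'I_m) : split (lshift n i) = inl i.
Proof. exact: (@unsplitK m n (inl i)). Qed.
Lemma split_r m n (i : 'I_n) : split (rshift m i) = inr i.
Proof. exact: (@unsplitK m n (inr i)). Qed.

Lemma ord_lr m n (k : 'I_(m + n)) :
  (exists i, k = lshift n i) \/ (exists j, k = rshift m j).
Proof.
rewrite -(splitK k); case: (split k) => [i|j] /=; [left|right]; eexists; reflexivity.
Qed.

Lemma fin_pos_min (R : realType) (T : finType) (F : T -> R) :
  (forall i, 0 < F i) -> exists2 e, 0 < e & forall i, e <= F i.
Proof.
move=> HF.
have: forall s : seq T, exists2 e, 0 < e & forall i, i \in s -> e <= F i.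
  elim=> [|a s [e he H]]; first by exists 1.
  exists (Num.min e (F a)); first by rewrite lt_min he HF.
  move=> i; rewrite inE => /orP [/eqP ->|/H hi]; rewrite ge_min ?lexx ?orbT //.
  by rewrite hi.
move=> /(_ (enum T)) [e he H]; exists e => // i; apply: H; by rewrite mem_enum.
Qed.

Lemma term_le_sum (R : realType) n (F : 'I_n -> R) :
  (forall i, 0 <= F i) -> forall j, F j <= \sum_i F i.
Proof.
move=> H j; rewrite (bigD1 j) //= lerDl; apply: sumr_ge0 => i _; exact: H.
Qed.

Section EqA.
Variable M : Type.

Lemma eqA_refl n (x y : 'I_n -> M) : x =1 y -> eqA x y.
Proof. by move=> h; exists id; split; [exists id|move=> i; rewrite h]. Qed.

Lemma eqA_sym n m (x : 'I_n -> M) (y : 'I_m -> M) : eqA x y -> eqA y x.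
Proof.
case=> f [[g fg gf] H]; exists g; split; first by exists f.
by move=> j; rewrite -H gf.
Qed.

Lemma eqA_trans n m k (x : 'I_n -> M) (y : 'I_m -> M) (z : 'I_k -> M) :
  eqA x y -> eqA y z -> eqA x z.
Proof.
case=> f [bf Hf] [g [bg Hg]]; exists (g \o f); split; first exact: bij_comp.
by move=> i /=; rewrite Hg Hf.
Qed.

Lemma eqA_card n m (x : 'I_n -> M) (y : 'I_m -> M) : eqA x y -> n = m.
Proof. by case=> f [bf _]; have := bij_eq_card bf; rewrite !card_ord. Qed.
End EqA.
Section GLemmas.
Variables (R : realType) (M : Type) (d : M -> M -> R).
Hypothesis hd0 : forall x y, 0 <= d x y.

Definition Gsc n (x y : 'I_n -> M) (s : 'S_n) : R :=
  \sum_(i < n) d (x i) (y (s i)) ^+ 2.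

Lemma Gsc_ge0 n (x y : 'I_n -> M) s : 0 <= Gsc x y s.
Proof. apply: sumr_ge0 => i _; exact: sqr_ge0. Qed.

Lemma G_ex n (x y : 'I_n -> M) : exists s, G d x y = Gcost d x y s.
Proof.
rewrite /G; apply: (big_ind (fun v => exists s, v = Gcost d x y s)).
- by exists 1%g.
- move=> u v [s ->] [t ->]; case: (leP (Gcost d x y s) (Gcost d x y t)) => _.
  by exists s. by exists t.
- by move=> s _; exists s.
Qed.

Lemma G_le n (x y : 'I_n -> M) s : G d x y <= Gcost d x y s.
Proof.
rewrite /G.
have: s \in index_enum _ by rewrite mem_index_enum.
elim: (index_enum _) => [|a l IH] //; rewrite inE big_cons => /orP [/eqP <-|/IH h].
  by rewrite ge_min lexx.
by rewrite ge_min h orbT.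
Qed.

Lemma G_ge0 n (x y : 'I_n -> M) : 0 <= G d x y.
Proof. by have [s ->] := G_ex x y; rewrite /Gcost sqrtr_ge0. Qed.

Lemma Gcost_sq n (x y : 'I_n -> M) s : Gcost d x y s ^+ 2 = Gsc x y s.
Proof. by rewrite /Gcost sqr_sqrtr // Gsc_ge0. Qed.

Lemma G_sq_ex n (x y : 'I_n -> M) : exists s, G d x y ^+ 2 = Gsc x y s.
Proof. by have [s ->] := G_ex x y; exists s; rewrite Gcost_sq. Qed.

Lemma G_sq_le n (x y : 'I_n -> M) s : G d x y ^+ 2 <= Gsc x y s.
Proof.
rewrite -Gcost_sq; have h1 := G_le x y s; have h2 := G_ge0 x y; nra.
Qed.

Lemma G_small n (x y : 'I_n -> M) e : G d x y < e ->
  exists s : 'S_n, forall i, d (x i) (y (s i)) < e.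
Proof.
move=> hG; have [s hs] := G_sq_ex x y; exists s => i.
have h0 := G_ge0 x y.
have : d (x i) (y (s i)) ^+ 2 <= Gsc x y s.
  by apply: (term_le_sum (F := fun i => d (x i) (y (s i)) ^+ 2)) => j; exact: sqr_ge0.
rewrite -hs => h; have := hd0 (x i) (y (s i)); nra.
Qed.

Lemma G_eqA_le n (x x' y y' : 'I_n -> M) :
  eqA x x' -> eqA y y' -> G d x' y' ^+ 2 <= G d x y ^+ 2.
Proof.
case=> f [[fi ffi fif] Hf] [g [[gi ggi gig] Hg]].
have [s ->] := G_sq_ex x y.
have inj : injective (fun j => g (s (fi j))).
  move=> j1 j2 /(can_inj ggi) /perm_inj /(can_inj fif) //.
apply: le_trans (G_sq_le x' y' (perm inj)) _.
rewrite /Gsc (reindex_inj (can_inj ffi)) /=; apply: ler_sum => i _.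
by rewrite permE /= ffi Hf Hg.
Qed.

Lemma G_eqA n m (x y : 'I_n -> M) (x' y' : 'I_m -> M) :
  eqA x x' -> eqA y y' -> G d x y = G d x' y'.
Proof.
move=> hx hy; have e := eqA_card hx; subst m.
have h1 := G_eqA_le hx hy; have h2 := G_eqA_le (eqA_sym hx) (eqA_sym hy).
have h3 := G_ge0 x y; have h4 := G_ge0 x' y'.
apply: le_anti; apply/andP; split; nra.
Qed.
End GLemmas.
Section Split.
Variables (R : realType) (M : Type) (d : M -> M -> R).
Hypothesis hd0 : forall x y, 0 <= d x y.

Lemma sumA_l a b (x : 'I_a -> M) (y : 'I_b -> M) i : sumA x y (lshift b i) = x i.
Proof. by rewrite /sumA split_l. Qed.
Lemma sumA_r a b (x : 'I_a -> M) (y : 'I_b -> M) i : sumA x y (rshift a i) = y i.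
Proof. by rewrite /sumA split_r. Qed.

Lemma split_G a b (x1 y1 : 'I_a -> M) (x2 y2 : 'I_b -> M) K :
  G d (sumA x1 x2) (sumA y1 y2) ^+ 2 < K ->
  (forall i j, K <= d (x1 i) (y2 j) ^+ 2) ->
  G d (sumA x1 x2) (sumA y1 y2) ^+ 2 = G d x1 y1 ^+ 2 + G d x2 y2 ^+ 2.
Proof.
move=> hK hcross.
set X := sumA x1 x2; set Y := sumA y1 y2.
have Gsc_split : forall s : 'S_(a + b), Gsc d X Y s =
   \sum_(i < a) d (x1 i) (Y (s (lshift b i))) ^+ 2 +
   \sum_(j < b) d (x2 j) (Y (s (rshift a j))) ^+ 2.
  move=> s; rewrite /Gsc big_split_ord /=; congr (_ + _); apply: eq_bigr => i _.
    by rewrite /X sumA_l. by rewrite /X sumA_r.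
apply: le_anti; apply/andP; split.
- have [s1 h1] := G_sq_ex d x1 y1; have [s2 h2] := G_sq_ex d x2 y2.
  pose h := fun k : 'I_(a + b) => match split k with
     | inl i => lshift b (s1 i) | inr j => rshift a (s2 j) end.
  have hl : forall i, h (lshift b i) = lshift b (s1 i) by move=> i; rewrite /h split_l.
  have hr : forall j, h (rshift a j) = rshift a (s2 j) by move=> j; rewrite /h split_r.
  have hinj : injective h.
    move=> k1 k2; case: (ord_lr k1) => [[i1 ->]|[j1 ->]];
      case: (ord_lr k2) => [[i2 ->]|[j2 ->]]; rewrite ?hl ?hr.
    + by move/lshift_inj/perm_inj ->.
    + by move/eqP; rewrite eq_lrshift.
    + by move/eqP; rewrite eq_rlshift.
    + by move/rshift_inj/perm_inj ->.
  apply: le_trans (G_sq_le d X Y (perm hinj)) _.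
  rewrite Gsc_split h1 h2 /Gsc; apply: lerD; apply: ler_sum => i _.
    by rewrite permE hl /Y sumA_l.
  by rewrite permE hr /Y sumA_r.
- have [s hs] := G_sq_ex d X Y; rewrite hs.
  have hleft : forall i, exists i', s (lshift b i) = lshift b i'.
    move=> i; case: (ord_lr (s (lshift b i))) => [//|[j hj]].
    exfalso; have := hcross i j.
    have : d (X (lshift b i)) (Y (s (lshift b i))) ^+ 2 <= Gsc d X Y s.
      by apply: (term_le_sum (F := fun k => d (X k) (Y (s k)) ^+ 2)) => k; exact: sqr_ge0.
    rewrite hj /X /Y sumA_l sumA_r -hs; move: hK; rewrite -/X -/Y; lra.
  pose f1 := fun i => match split (s (lshift b i)) with inl i' => i' | inr _ => i end.
  have hf1 : forall i, s (lshift b i) = lshift b (f1 i).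
    by move=> i; rewrite /f1; case: (hleft i) => i' ->; rewrite split_l.
  have f1inj : injective f1.
    by move=> i1 i2 e; apply: (@lshift_inj a b); apply: (@perm_inj _ s); rewrite !hf1 e.
  pose p1 := perm f1inj.
  have hright : forall j, exists j', s (rshift a j) = rshift a j'.
    move=> j; case: (ord_lr (s (rshift a j))) => [[i hi]|//].
    exfalso; have : i = f1 ((p1^-1)%g i) by rewrite -[RHS]permE permKV.
    move=> ei; move: hi; rewrite ei -hf1 => /perm_inj /eqP; by rewrite eq_rlshift.
  pose f2 := fun j => match split (s (rshift a j)) with inr j' => j' | inl _ => j end.
  have hf2 : forall j, s (rshift a j) = rshift a (f2 j).
    by move=> j; rewrite /f2; case: (hright j) => j' ->; rewrite split_r.
  have f2inj : injective f2.
    by move=> i1 i2 e; apply: (@rshift_inj a b); apply: (@perm_inj _ s); rewrite !hf2 e.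
  rewrite Gsc_split; apply: lerD.
    apply: le_trans (G_sq_le d x1 y1 p1) _; apply: ler_sum => i _.
    by rewrite permE hf1 /Y sumA_l.
  apply: le_trans (G_sq_le d x2 y2 (perm f2inj)) _; apply: ler_sum => i _.
  by rewrite permE hf2 /Y sumA_r.
Qed.
End Split.
Section Sel.
Variable M : Type.
Definition sel n k (i0 : 'I_n) (x : 'I_n -> M) (s : seq 'I_n) : 'I_k -> M :=
  fun i => x (nth i0 s i).

Lemma sel_perm n k k' (i0 : 'I_n) (x : 'I_n -> M) (s t : seq 'I_n) :
  perm_eq s t -> size s = k -> size t = k' ->
  eqA (sel (k:=k) i0 x s) (sel (k:=k') i0 x t).
Proof.
move=> hp hs ht.
have e : k' = k by rewrite -ht -hs (perm_size hp).
rewrite e in ht; subst k'; case/(perm_iotaP i0): hp => Is hIs hsI.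
have hsz : size Is = k by rewrite (perm_size hIs) size_iota.
have hlt : forall i : 'I_k, (nth 0%N Is i < k)%N.
  move=> i; have hi : (i < size Is)%N by rewrite hsz.
  by have := mem_nth 0%N hi; rewrite (perm_mem hIs) mem_iota ht.
have uI : uniq Is by rewrite (perm_uniq hIs) iota_uniq.
exists (fun i => Ordinal (hlt i)); split.
  apply: injF_bij => i j /(congr1 val) /= /eqP.
  by rewrite nth_uniq ?hsz // => /eqP /val_inj.
move=> i; rewrite /sel /= hsI (nth_map 0%N) // hsz //.
Qed.

Lemma sel_wd n k (i0 : 'I_n) (x y : 'I_n -> M) (A B : {set 'I_n}) (f : 'I_n -> 'I_n) :
  bijective f -> (forall i, y (f i) = x i) -> (forall i, (f i \in B) = (i \in A)) ->
  size (enum A) = k ->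
  eqA (sel (k:=k) i0 x (enum A)) (sel (k:=k) i0 y (enum B)).
Proof.
move=> [g fg gf] hxy hAB hk.
have finj := can_inj fg.
have hp : perm_eq (map f (enum A)) (enum B).
  apply: uniq_perm; rewrite ?enum_uniq ?(map_inj_uniq finj) ?enum_uniq //.
  move=> j; rewrite -(gf j) mem_enum (mem_map finj) mem_enum hAB //.
apply: eqA_trans (sel_perm i0 y hp _ _); last by rewrite -(perm_size hp) size_map hk.
  apply: eqA_refl => i; rewrite /sel (nth_map i0) ?hk // hxy //.
by rewrite size_map.
Qed.
End Sel.
Unset Implicit Arguments. Set Strict Implicit. Set Printing Implicit Defensive.
Theorem theorem3p1 (R : realType) (M : Type) (d : M -> M -> R)
  (hd : is_metric d) (Q : nat) (hQ : (2 <= Q)%N) (P : 'I_Q -> M)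
  (hP : ~ exists p : M, eqA P (fun _ : 'I_Q => p)) :
  exists (r : nat) (U : ('I_Q -> M) -> Prop)
         (pi1 : ('I_Q -> M) -> ('I_r -> M))
         (pi2 : ('I_Q -> M) -> ('I_(Q - r) -> M)),
    [/\ (0 < r < Q)%N,
        [/\ saturated U, openA d U & U P],
        [/\ wellDefinedOn U pi1, continuousOn d U pi1,
            wellDefinedOn U pi2 & continuousOn d U pi2],
        (forall S, U S -> eqA S (sumA (pi1 S) (pi2 S))) &
        (forall S T, U S -> U T ->
           G d S T ^+ 2 = G d (pi1 S) (pi1 T) ^+ 2 + G d (pi2 S) (pi2 T) ^+ 2)].
Proof.
case: hd => hd0 hdeq hdsym hdtri.
have hdxx : forall x, d x x = 0 by move=> x; apply/hdeq.
pose i0 : 'I_Q := Ordinal (leq_trans (isT : (0 < 2)%N) hQ).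
pose p0 := P i0.
have [d0 d0pos hfar] : exists2 d0 : R, 0 < d0 &
    forall i, d (P i) p0 != 0 -> d0 <= d (P i) p0.
  have hF : forall i, 0 < (fun i => if d (P i) p0 == 0 then 1 else d (P i) p0) i.
    move=> i /=; case: ifP => // /negbT h; by rewrite lt_neqAle eq_sym h hd0.
  have [e he H] := fin_pos_min hF.
  exists e => // i hi; by have := H i; rewrite /= (negbTE hi).
have hQR : (2 : R) <= Q%:R by rewrite ler_nat.
pose eps := d0 / (8 * Q%:R).
have hQeps : Q%:R * eps = d0 / 8.
  rewrite /eps; field.
  rewrite pnatr_eq0; lia.
have eps_pos : 0 < eps.
  rewrite /eps divr_gt0 // mulr_gt0 //; lra.
have eps16 : eps <= d0 / 16 by nra.
pose cl := fun m => d m p0 < d0 / 2.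
pose U := fun S : 'I_Q -> M =>
  exists f : 'I_Q -> 'I_Q, bijective f /\ forall i, d (P i) (S (f i)) < eps.
have hpt : forall (S : 'I_Q -> M) (f : 'I_Q -> 'I_Q), (forall i, d (P i) (S (f i)) < eps) -> forall i,
    [/\ cl (S (f i)) = cl (P i), cl (P i) -> d (S (f i)) p0 < eps &
        ~~ cl (P i) -> d0 - eps < d (S (f i)) p0].
  move=> S f hS i; have h1 := hS i.
  have t1 := hdtri (S (f i)) (P i) p0; have t2 := hdtri (P i) (S (f i)) p0.
  rewrite (hdsym (S (f i)) (P i)) in t1.
  case: (boolP (d (P i) p0 == 0)) => [/eqP h0|hn].
    rewrite h0 in t1; rewrite /cl h0.
    have -> : 0 < d0 / 2 by lra.
    split; [apply/idP; lra | move=> _; lra | by []].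
  have := hfar i hn => hf.
  have hc : cl (P i) = false by rewrite /cl; apply/negbTE; rewrite -leNgt; lra.
  rewrite hc; split => //; last by move=> _; lra.
  by rewrite /cl; apply/negbTE; rewrite -leNgt; lra.
have hUj : forall S, U S -> forall j,
    (cl (S j) -> d (S j) p0 < eps) /\ (~~ cl (S j) -> d0 - eps < d (S j) p0).
  move=> S [f [[g fg gf] hS]] j; rewrite -(gf j).
  have [e1 e2 e3] := hpt S f hS (g j); rewrite e1; split => //.
pose r := #|[set i | cl (P i)]|.
have hUcard : forall S, U S -> #|[set j | cl (S j)]| = r.
  move=> S [f [bf hS]]; rewrite -(card_preimset _ (bij_inj bf)); apply: eq_card => i.
  by rewrite !inE; have [-> _ _] := hpt S f hS i.
have hUcardC : forall S, U S -> #|~: [set j | cl (S j)]| = (Q - r)%N.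
  move=> S hS; have := cardsC [set j | cl (S j)]; rewrite card_ord hUcard //; lia.
pose pi1 := fun S : 'I_Q -> M => sel (k:=r) i0 S (enum [set j | cl (S j)]).
pose pi2 := fun S : 'I_Q -> M => sel (k:=(Q - r)%N) i0 S (enum (~: [set j | cl (S j)])).
have hdec : forall S, U S -> eqA S (sumA (pi1 S) (pi2 S)).
  move=> S hS.
  have e1 : eqA S (sel (k:=Q) i0 S (enum 'I_Q)).
    by apply: eqA_refl => i; rewrite /sel nth_ord_enum.
  apply: (eqA_trans e1); apply: eqA_trans.
    apply: (sel_perm (k:=Q) (k':=(r + (Q - r))%N) _ _ (t := enum [set j | cl (S j)] ++ enum (~: [set j | cl (S j)]))).
    - apply: uniq_perm; first exact: enum_uniq.
        rewrite cat_uniq !enum_uniq andbT /=; apply/hasPn => j.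
        by rewrite !mem_enum in_setC => ->.
      by move=> j; rewrite mem_cat !mem_enum in_setC orbN.
    - by rewrite -cardE card_ord.
    - by rewrite size_cat -!cardE hUcard // hUcardC.
  apply: eqA_refl => k; rewrite /sumA /pi1 /pi2 /sel.
  case: splitP => j hk; rewrite hk nth_cat -cardE hUcard //.
    by rewrite ltn_ord.
  by rewrite ltnNge leq_addr /= addKn.
have hiso : forall S T, U S -> U T ->
    G d S T ^+ 2 = G d (pi1 S) (pi1 T) ^+ 2 + G d (pi2 S) (pi2 T) ^+ 2.
  move=> S T hS hT.
  have eG := G_eqA d (hdec S hS) (hdec T hT).
  rewrite eG; apply: (split_G (K := (d0 / 2) ^+ 2)).
  - rewrite -eG.
    case: hS => [f [[fi ffi fif] hf]]; case: hT => [g [bg hg]].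
    have inj : injective (fun j => g (fi j)).
      by move=> j1 j2 /(bij_inj bg) /(can_inj fif).
    apply: le_lt_trans (G_sq_le d S T (perm inj)) _.
    rewrite /Gsc (reindex_inj (can_inj ffi)) /=.
    apply: (@le_lt_trans _ _ (\sum_(i < Q) (2 * eps) ^+ 2)).
      apply: ler_sum => i _; rewrite permE /= ffi.
      have t := hdtri (S (f i)) (P i) (T (g i)); rewrite (hdsym (S (f i)) (P i)) in t.
      have := hf i; have := hg i; have := hd0 (S (f i)) (T (g i)); move: t; nra.
    rewrite sumr_const card_ord -[_ *+ Q]mulr_natr.
    have : (2 * eps) ^+ 2 * Q%:R = 4 * eps * (Q%:R * eps) by ring.
    move=> ->; rewrite hQeps; nra.
  - move=> i j; rewrite /pi1 /pi2 /sel.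
    set j1 := nth i0 _ i; set j2 := nth i0 _ j.
    have c1 : cl (S j1).
      have : j1 \in enum [set j | cl (S j)] by apply: mem_nth; rewrite -cardE hUcard.
      by rewrite mem_enum inE.
    have c2 : ~~ cl (T j2).
      have : j2 \in enum (~: [set j | cl (T j)]) by apply: mem_nth; rewrite -cardE hUcardC.
      by rewrite mem_enum in_setC inE.
    have h1 := (hUj S hS j1).1 c1; have h2 := (hUj T hT j2).2 c2.
    have t := hdtri (T j2) (S j1) p0; rewrite (hdsym (T j2) (S j1)) in t.
    have hl : d0 / 2 <= d (S j1) (T j2) by lra.
    have : 0 <= d0 / 2 by lra.
    nra.
exists r, U, pi1, pi2; split.
- apply/andP; split.
    apply/card_gt0P; exists i0; rewrite inE /cl /p0 hdxx; lra.
  case: (boolP [forall i, cl (P i)]) => [/forallP hall|/forallPn [i hi]].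
    exfalso; apply: hP; exists p0; apply: eqA_refl => i.
    apply/hdeq; rewrite hdsym; apply/eqP.
    apply/negPn/negP => hn; rewrite hdsym in hn.
    have := hfar i hn; have := hall i; rewrite /cl; lra.
  have := cardsC [set i | cl (P i)]; rewrite card_ord -/r.
  have : (0 < #|~: [set i | cl (P i)]|)%N.
    by apply/card_gt0P; exists i; rewrite in_setC inE.
  lia.
- split.
  + move=> x y [f [bf hf]] [g [bg hg]]; exists (f \o g); split.
      exact: bij_comp.
    by move=> i /=; rewrite hf.
  + move=> x [f [bf hf]].
    have [e he H] := @fin_pos_min R _ (fun i => eps - d (P i) (x (f i)))
      (fun i => ltac:(rewrite subr_gt0; exact: hf)).
    exists e => // y hG; have [s hs] := G_small hd0 hG.
    exists (s \o f); split.
      apply: bij_comp => //; exact: injF_bij (@perm_inj _ s).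
    move=> i /=; have := hdtri (P i) (x (f i)) (y (s (f i))).
    have := hs (f i); have := H i; lra.
  + by exists id; split; [exists id|move=> i; rewrite hdxx].
- split.
  + move=> x y hx hy [f [bf hf]]; apply: (sel_wd i0 bf hf).
      by move=> i; rewrite !inE hf.
    by rewrite -cardE hUcard.
  + move=> x hx e he; exists e => // y hy hG.
    have := hiso x y hx hy; have := G_ge0 d x y; have := G_ge0 d (pi1 x) (pi1 y).
    have := sqr_ge0 (G d (pi2 x) (pi2 y)); nra.
  + move=> x y hx hy [f [bf hf]]; apply: (sel_wd i0 bf hf).
      by move=> i; rewrite !in_setC !inE hf.
    by rewrite -cardE hUcardC.
  + move=> x hx e he; exists e => // y hy hG.
    have := hiso x y hx hy; have := G_ge0 d x y; have := G_ge0 d (pi2 x) (pi2 y).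
    have := sqr_ge0 (G d (pi1 x) (pi1 y)); nra.
- exact: hdec.
- exact: hiso.
Qed.
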